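(* Let $\mathcal A$ be an uncountable almost disjoint family on a countable set $W$. If $\mathcal A$ is Luzin then $\mathcal A$ is near-Luzin.
   Context: An almost disjoint family is a collection of infinite sets whose pairwise intersections are finite. $\mathcal A$ is Luzin iff there is an enumeration $\mathcal A=\{a_\alpha:\alpha<\omega_1\}$ such that for every finite $w\subseteq W$ and every $\alpha<\omega_1$ the set $\{\beta<\alpha: a_\alpha\cap a_\beta\subseteq w\}$ is finite. $\mathcal A$ is near-Luzin iff for all uncountable $\mathcal C,\mathcal D\subseteq\mathcal A$ the set $\bigcup\mathcal C\cap\bigcup\mathcal D$ is infinite. *)

(* Defs.v *)
From HB Require Import structures.
From mathcomp Require Import all_boot all_order.
From mathcomp Require Import boolp classical_sets cardinality.
Set Implicit Arguments. Unset Strict Implicit. Unset Printing Implicit Defensive.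
Local Open Scope classical_set_scope.

Definition almost_disjoint (W : Type) (A : set (set W)) : Prop :=
  (forall a, A a -> infinite_set a) /\
  (forall a b, A a -> A b -> a <> b -> finite_set (a `&` b)).

(* (I, lt) is order-isomorphic to omega_1: a well-ordering (strict,
   total, well-founded) whose carrier is uncountable but every proper
   initial segment {b | b < a} is countable. *)
Definition omega1_order (I : Type) (lt : I -> I -> Prop) : Prop :=
  (forall x, ~ lt x x) /\
  (forall x y z, lt x y -> lt y z -> lt x z) /\
  (forall x y, lt x y \/ x = y \/ lt y x) /\
  well_founded lt /\
  ~ countable [set: I] /\
  (forall a, countable [set b | lt b a]).

Definition Luzin (W : Type) (A : set (set W)) : Prop :=
  exists (I : Type) (lt : I -> I -> Prop) (e : I -> set W),
    [/\ omega1_order lt,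
        (forall x y, e x = e y -> x = y),
        e @` setT = A &
        (forall (w : set W), finite_set w -> forall alpha : I,
            finite_set [set beta | lt beta alpha /\ e alpha `&` e beta `<=` w])].

Definition near_Luzin (W : Type) (A : set (set W)) : Prop :=
  forall C D : set (set W), C `<=` A -> D `<=` A ->
    ~ countable C -> ~ countable D ->
    infinite_set ((\bigcup_(c in C) c) `&` (\bigcup_(d in D) d)).

(* Main.v *)
Require Import Defs.
From mathcomp Require Import all_boot all_order.
From mathcomp Require Import boolp classical_sets functions cardinality.
Local Open Scope classical_set_scope.

Lemma countU2 T (A B : set T) : countable A -> countable B -> countable (A `|` B).
Proof.
move=> cA cB.
have -> : A `|` B = \bigcup_(i in [set: bool]) (if i then A else B).
  apply/seteqP; split=> x.
    by case=> H; [exists true | exists false].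
  by case=> -[] _ H; [left|right].
apply: bigcup_countable => // -[]//.
Qed.

Theorem claim0p4 (W : Type) (A : set (set W)) :
  countable [set: W] -> almost_disjoint A -> ~ countable A ->
  Luzin A -> near_Luzin A.
Proof.
move=> _ _ _ [I [lt [e [[irr [tr [tot [wf [unc segc]]]]] einj eA Lz]]]].
move=> C D CA DA uC uD Hfin.
set w := (\bigcup_(c in C) c) `&` (\bigcup_(d in D) d) in Hfin.
set CI := [set i | C (e i)].
set DI := [set i | D (e i)].
have uI : forall (X : set (set W)) , X `<=` A -> ~ countable X -> ~ countable [set i | X (e i)].
  move=> X XA uX cXI; apply: uX.
  have sub : X `<=` e @` [set i | X (e i)].
    move=> x Xx; have : A x by apply: XA.
    rewrite -eA => -[i _ ei]; exists i => //=; by rewrite ei.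
  apply: sub_countable (subset_card_le sub) _.
  exact: card_le_trans (card_image_le _ _) cXI.
have uCI := uI C CA uC.
have uDI := uI D DA uD.
have CIinf : infinite_set CI by move=> /finite_set_countable.
move: CIinf => /infiniteP.
elim/Ppointed: I => I in lt e irr tr tot wf unc segc einj eA Lz uI CI uCI DI uDI *; last first.
2:{ move=> _; apply: unc; rewrite emptyE; exact: countable0. }
move=> /pcard_leP[f]; pose g : nat -> I := f.
have gC : forall n, CI (g n) by move=> n; apply: (@funS _ _ _ _ f).
have ginj : forall n m, g n = g m -> n = m by move=> n m; apply: (@inj _ _ _ f); rewrite /= ?inE.
pose U := \bigcup_(n in [set: nat]) ([set b | lt b (g n)] `|` [set g n]).
have cU : countable U.
  apply: bigcup_countable => // n _; apply: countU2 => //; exact: countable1.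
have [alpha [DIa nUa]] : exists alpha, DI alpha /\ ~ U alpha.
  apply: contrapT => H; apply: uDI; apply: sub_countable cU.
  apply: subset_card_le => x Dx; apply: contrapT => Ux; apply: H; by exists x.
have ltf : forall n, lt (g n) alpha.
  move=> n; case: (tot (g n) alpha) => [//|[E|E]]; exfalso; apply: nUa; exists n => //.
    by right.
  by left.
have := Lz w Hfin alpha; apply/infiniteP/pcard_leP/injfunPex; exists g.
  move=> n _ /=; split; first exact: ltf.
  move=> x [xa xb]; split.
    by exists (e (g n)) => //; apply: gC.
  by exists (e alpha).
by move=> n m _ _; apply: ginj.
Qed.
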